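(* Let $\mathbf{A}$ be a $0$-$1$ matrix of full row rank with $I$ columns and at least one $1$ in every column, let $RM_{\boldsymbol p}(\mathbf{A})=\{\boldsymbol p\in\mathbb R^I_{>0}:\mathbf1'\boldsymbol p=1,\ \log\boldsymbol p=\mathbf A'\boldsymbol\theta\text{ for some }\boldsymbol\theta\}$, let $\mathbf D$ be a $K\times I$ matrix whose rows form a basis of $\mathrm{Ker}(\mathbf A)$, and let $\boldsymbol p_0\in RM_{\boldsymbol p}(\mathbf A)$, $\boldsymbol Y_N\sim\mathrm{Mult}(N,\boldsymbol p_0)$. Suppose the model has the overall effect, i.e. the vector $\mathbf 1$ lies in the row space of $\mathbf A$. Then the covariance matrix of the asymptotic normal distribution (as $N\to\infty$) of $N^{1/2}(\hat{\boldsymbol p}_N-\boldsymbol p_0)$ conditional on existence of the MLE, and of $N^{1/2}(\tilde{\boldsymbol p}_N-\boldsymbol p_0)$, namely $\mathbf M\boldsymbol\Sigma\mathbf M'$ with $\boldsymbol\Sigma=\Delta[\boldsymbol p_0]-\boldsymbol p_0\boldsymbol p_0'$, $\mathbf H=(\mathbf 1,\Delta[\boldsymbol p_0^{-1}]\mathbf D')$, $\mathbf M=\mathbf I-\Delta[\boldsymbol p_0]\mathbf H(\mathbf H'\Delta[\boldsymbol p_0]\mathbf H)^{-1}\mathbf H'$, is equal to $$\boldsymbol\Sigma-\mathbf D'(\mathbf D\Delta[\boldsymbol p_0^{-1}]\mathbf D')^{-1}\mathbf D.$$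
   Context: $\Delta[\boldsymbol v]$ is the diagonal matrix with diagonal $\boldsymbol v$; vector powers and logs are componentwise. $\hat{\boldsymbol p}_N$ is the MLE of $\boldsymbol p_0$ under the model (maximizer of $\boldsymbol Y_N'\log\boldsymbol p$ over the model); $\tilde{\boldsymbol p}_N$ equals $\hat{\boldsymbol p}_N$ when the MLE exists and $(1/I)\mathbf1$ otherwise. *)

(* Defs.v *)
From HB Require Import structures.
From mathcomp Require Import all_boot all_order all_algebra.
From mathcomp Require Import reals exp.
Set Implicit Arguments. Unset Strict Implicit. Unset Printing Implicit Defensive.
Import Order.TTheory GRing.Theory Num.Theory.
Local Open Scope ring_scope.

Definition Delta (R : realType) (n : nat) (v : 'cV[R]_n) : 'M[R]_n := diag_mx v^T.

Definition vinv (R : realType) (n : nat) (v : 'cV[R]_n) : 'cV[R]_n := map_mx (fun x => x^-1) v.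
Definition vlog (R : realType) (n : nat) (v : 'cV[R]_n) : 'cV[R]_n := map_mx (@ln R) v.

Definition zero_one_mx (R : realType) (J I : nat) (A : 'M[R]_(J, I)) : Prop :=
  forall i j, A i j = 0 \/ A i j = 1.

Definition every_col_has_one (R : realType) (J I : nat) (A : 'M[R]_(J, I)) : Prop :=
  forall j, exists i, A i j = 1.

Definition RMp (R : realType) (J I : nat) (A : 'M[R]_(J, I)) (p : 'cV[R]_I) : Prop :=
  (forall i, 0 < p i 0) /\ \sum_i p i 0 = 1 /\
  exists theta : 'cV[R]_J, vlog p = A^T *m theta.

(* the rows of D form a basis of Ker(A) = { x : A x = 0 } (row vectors u with u A' = 0) *)
Definition rows_basis_of_ker (R : realType) (J I K : nat)
  (A : 'M[R]_(J, I)) (D : 'M[R]_(K, I)) : Prop :=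
  row_free D /\ (D == kermx A^T)%MS.

Definition overall_effect (R : realType) (J I : nat) (A : 'M[R]_(J, I)) : Prop :=
  ((const_mx 1 : 'rV[R]_I) <= A)%MS.

Definition SigmaM (R : realType) (I : nat) (p : 'cV[R]_I) : 'M[R]_I :=
  Delta p - p *m p^T.
Definition HM (R : realType) (I K : nat) (p : 'cV[R]_I) (D : 'M[R]_(K, I)) : 'M[R]_(I, 1 + K) :=
  row_mx (const_mx 1) (Delta (vinv p) *m D^T).
Definition MM (R : realType) (I K : nat) (p : 'cV[R]_I) (D : 'M[R]_(K, I)) : 'M[R]_I :=
  1%:M - Delta p *m HM p D *m invmx ((HM p D)^T *m Delta p *m HM p D) *m (HM p D)^T.

(* Main.v *)
Require Import Defs.
From HB Require Import structures.
From mathcomp Require Import all_boot all_order all_algebra.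
From mathcomp Require Import reals exp.
Import Order.TTheory GRing.Theory Num.Theory.
Local Open Scope ring_scope.

Section Alg.
Variables (F : fieldType) (I K : nat).
Variables (P Q : 'M[F]_I) (p e : 'cV[F]_I) (D : 'M[F]_(K, I)).
Hypotheses (PQ : P *m Q = 1%:M) (QP : Q *m P = 1%:M) (PT : P^T = P) (QT : Q^T = Q)
  (Pe : P *m e = p) (Qp : Q *m p = e) (ep : e^T *m p = 1%:M) (De : D *m e = 0)
  (Gu : D *m Q *m D^T \in unitmx).

Lemma alg_main :
  let G := D *m Q *m D^T in
  let H := row_mx e (Q *m D^T) in
  let M := 1%:M - P *m H *m invmx (H^T *m P *m H) *m H^T in
  let S := P - p *m p^T in
  M *m S *m M^T = S - D^T *m invmx G *m D.
Proof.
move=> G H M S.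
have GT : G^T = G by rewrite /G !trmx_mul trmxK QT mulmxA.
have eP : e^T *m P = p^T by rewrite -Pe trmx_mul PT.
have pQ : p^T *m Q = e^T by rewrite -Qp trmx_mul QT.
have pe : p^T *m e = 1%:M by rewrite -(trmxK e) -trmx_mul ep trmx1.
have eD : e^T *m D^T = 0 by rewrite -trmx_mul De trmx0.
have HT : H^T = col_mx e^T (D *m Q) by rewrite /H tr_row_mx trmx_mul trmxK QT.
have HPH : H^T *m P *m H = block_mx (1%:M : 'M_1) 0 0 G.
  rewrite HT mul_col_mx mul_col_row eP pe mulmxA pQ eD -!mulmxA Pe Qp De.
  by rewrite (mulmxA P Q) PQ mul1mx mulmxA.
set Gi := invmx G.
have Hinv : invmx (H^T *m P *m H) = block_mx (1%:M : 'M_1) 0 0 Gi.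
  have HB : block_mx (1%:M : 'M_1) 0 0 G *m block_mx (1%:M : 'M_1) 0 0 Gi = 1%:M.
    rewrite mulmx_block !mulmx0 !mul0mx !addr0 !add0r mulmx1 mulmxV //.
    by rewrite -scalar_mx_block.
  have [Bu _] := mulmx1_unit HB.
  by rewrite HPH -[RHS]mul1mx -(mulVmx Bu) -mulmxA HB mulmx1.
have PH : P *m H = row_mx p D^T by rewrite /H mul_mx_row Pe mulmxA PQ mul1mx.
have ME : M = 1%:M - (p *m e^T + D^T *m Gi *m (D *m Q)).
  rewrite /M Hinv PH mul_row_block HT mul_row_col !mulmx0 !addr0 !add0r mulmx1.
  by rewrite mulmxA.
have MS : M *m S = S - D^T *m Gi *m D.
  rewrite ME /S !mulmxBl !mulmxDl mul1mx !mulmxBr.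
  have -> : p *m e^T *m P - p *m e^T *m (p *m p^T) = 0.
    by rewrite -!mulmxA eP (mulmxA e^T) ep mul1mx subrr.
  have -> : D^T *m Gi *m (D *m Q) *m P - D^T *m Gi *m (D *m Q) *m (p *m p^T)
      = D^T *m Gi *m D.
    by rewrite -!mulmxA QP mulmx1 (mulmxA Q) Qp (mulmxA D) De mul0mx !mulmx0 subr0.
  by rewrite add0r.
rewrite MS ME !linearB /= !linearD /= trmx1 !trmx_mul !trmxK QT trmx_inv GT -/Gi.
rewrite mulmx1.
have Se : (S - D^T *m Gi *m D) *m e = 0.
  by rewrite /S !mulmxBl Pe -!mulmxA pe De !mulmx0 mulmx1 subrr subr0.
have SQ : (S - D^T *m Gi *m D) *m (Q *m D^T) = 0.
  rewrite /S !mulmxBl !mulmxA PQ mul1mx -(mulmxA p) pQ -(mulmxA p) eD mulmx0 subr0.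
  by rewrite -(mulmxA _ D Q) -(mulmxA _ (D *m Q)) -/G mulmxKV ?subrr.
rewrite (mulmxA _ e) Se mul0mx oppr0 add0r.
rewrite (mulmxA _ (Q *m D^T)) SQ mul0mx. by rewrite oppr0 addr0.
Qed.
End Alg.

Lemma main_aux (R : realType) (J I K : nat)
  (A : 'M[R]_(J, I)) (D : 'M[R]_(K, I)) (p0 : 'cV[R]_I) :
  rows_basis_of_ker A D ->
  RMp A p0 ->
  overall_effect A ->
  MM p0 D *m SigmaM p0 *m (MM p0 D)^T =
    SigmaM p0 - D^T *m invmx (D *m Delta (vinv p0) *m D^T) *m D.
Proof.
move=> [Dfree Dker] [ppos [psum _]] oe.
have pn0 : forall i, p0 i 0 != 0 by move=> i; rewrite gt_eqF.
set e : 'cV[R]_I := const_mx 1.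
have PQ : Delta p0 *m Delta (vinv p0) = 1%:M.
  rewrite /Delta mulmx_diag -diag_const_mx; congr diag_mx.
  by apply/matrixP => i j; rewrite !mxE mulfV.
have QP : Delta (vinv p0) *m Delta p0 = 1%:M.
  rewrite /Delta mulmx_diag -diag_const_mx; congr diag_mx.
  by apply/matrixP => i j; rewrite !mxE mulVf.
have PT : (Delta p0)^T = Delta p0 by rewrite /Delta tr_diag_mx.
have QT : (Delta (vinv p0))^T = Delta (vinv p0) by rewrite /Delta tr_diag_mx.
have Pe : Delta p0 *m e = p0.
  by apply/matrixP => i j; rewrite /Delta mul_diag_mx !mxE (ord1 j) mulr1.
have Qp : Delta (vinv p0) *m p0 = e.
  by apply/matrixP => i j; rewrite /Delta mul_diag_mx !mxE (ord1 j) mulVf.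
have ep : e^T *m p0 = 1%:M.
  apply/matrixP => i j; rewrite !mxE (ord1 i) (ord1 j) eqxx /= -psum.
  by apply: eq_bigr => k _; rewrite !mxE mul1r.
have De : D *m e = 0.
  case/submxP: oe => w hw.
  move: Dker => /andP [/sub_kermxP DA _].
  by rewrite /e -trmx_const hw trmx_mul mulmxA DA mul0mx.
have Gu : D *m Delta (vinv p0) *m D^T \in unitmx.
  rewrite -row_free_unit -kermx_eq0; apply/eqP.
  set G := D *m Delta (vinv p0) *m D^T.
  set x := kermx G.
  have xG : x *m G = 0 by exact: mulmx_ker.
  apply/eqP; rewrite -(mulmx_free_eq0 _ Dfree); apply/eqP.
  set y := x *m D.
  have yy : y *m Delta (vinv p0) *m y^T = 0.
    by rewrite /y trmx_mul !mulmxA -(mulmxA x D) -(mulmxA x) xG mul0mx.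
  apply/matrixP => i j; rewrite [RHS]mxE.
  have hs : \sum_k (y i k * (p0 k 0)^-1) * y i k = 0.
    have h := congr1 (fun M : 'M[R]_K => M i i) yy.
    rewrite /= [RHS]mxE [LHS]mxE in h; rewrite -[RHS]h.
    by apply: eq_bigr => k _; rewrite /Delta mul_mx_diag !mxE.
  have nn : forall k, true -> 0 <= (y i k * (p0 k 0)^-1) * y i k.
    move=> k _; rewrite mulrAC mulr_ge0 //.
    by rewrite -expr2 sqr_ge0.
    by rewrite invr_ge0 ltW.
  have hj : y i j / p0 j 0 * y i j = 0 by apply: (psumr_eq0P nn hs).
  move: hj.
  rewrite mulrAC => /eqP; rewrite mulf_eq0 invr_eq0 (negbTE (pn0 j)) orbF.
  by rewrite mulf_eq0 orbb => /eqP.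
have := @alg_main R I K _ _ _ _ D PQ QP PT QT Pe Qp ep De Gu.
rewrite /MM /SigmaM /HM. exact.
Qed.

Theorem corollary3p9 (R : realType) (J I K : nat)
  (A : 'M[R]_(J, I)) (D : 'M[R]_(K, I)) (p0 : 'cV[R]_I) :
  zero_one_mx A ->
  \rank A = J ->
  every_col_has_one A ->
  rows_basis_of_ker A D ->
  RMp A p0 ->
  overall_effect A ->
  MM p0 D *m SigmaM p0 *m (MM p0 D)^T =
    SigmaM p0 - D^T *m invmx (D *m Delta (vinv p0) *m D^T) *m D.
Proof. by move=> _ _ _; apply: main_aux. Qed.
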